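(* For all nonnegative integers $c_<$, $c_=$ and $m$, $$\sum_{a=0}^{m}(a+1)\frac{\binom{c_<}{a}\binom{c_<+c_=-a}{m-a}}{\binom{m}{a}}=\frac{(m+1)(m+2)}{(c_=+1)(c_=+2)}\binom{c_<+c_=+2}{m+2}-\frac{(c_<+1)(c_<-m)}{c_=+1}\binom{c_<}{m}+\frac{(c_<-m)(c_<-m-1)}{c_=+2}\binom{c_<}{m}.$$
   Context: Binomial coefficients use the convention $\binom{p}{q}=0$ when $q>p$ or $q<0$ (for nonnegative integer $p$). *)

(* Defs.v *)
From mathcomp Require Import all_boot all_order all_algebra.

(* Main.v *)
Require Import Defs.
From mathcomp Require Import all_boot all_order all_algebra zify ring lra.
Import GRing.Theory Num.Theory.
Local Open Scope ring_scope.

Lemma binR (p q : nat) : (q <= p)%N ->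
  ('C(p,q)%:R : rat) = p`!%:R / (q`!%:R * (p-q)`!%:R).
Proof.
move=> hq; rewrite -(bin_fact hq) natrM [(_ * _)%:R]natrM mulfK //.
by rewrite mulf_neq0 // pnatr_eq0 -lt0n fact_gt0.
Qed.

Arguments binR {p q}.
Lemma factR_neq0 (p : nat) : (p`!%:R : rat) != 0.
Proof. by rewrite pnatr_eq0 -lt0n fact_gt0. Qed.

Ltac nz := do ?[apply/andP; split]; rewrite ?factR_neq0 //;
  (apply/eqP; match goal with |- context[?k%:R] => have := ler0n rat k; lra end).

Lemma term_id (cl ce m a : nat) : (a <= m)%N ->
  ('C(cl,a)%:R * 'C(cl+ce-a,m-a)%:R) / ('C(m,a)%:R : rat)
  = 'C(cl+ce-a,ce)%:R * ('C(cl+ce,m)%:R / 'C(cl+ce,cl)%:R).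
Proof.
move=> am.
have Cma : ('C(m,a)%:R : rat) != 0 by rewrite pnatr_eq0 -lt0n bin_gt0.
have Cncl : ('C(cl+ce,cl)%:R : rat) != 0 by rewrite pnatr_eq0 -lt0n bin_gt0 leq_addr.
case: (ltnP cl a) => hca.
  rewrite bin_small // mul0r mul0r.
  case: (leqP a (cl+ce)) => han.
    by rewrite (@bin_small (cl+ce-a)) ?mul0r //; lia.
  by rewrite (@bin_small (cl+ce) m) ?mul0r ?mulr0 //; lia.
case: (ltnP (cl+ce) m) => hmn.
  rewrite (@bin_small (cl+ce-a)) ?mulr0 ?mul0r; last lia.
  by rewrite (@bin_small (cl+ce) m) ?mul0r ?mulr0.
rewrite (binR hca) (binR (_ : m - a <= cl+ce-a)%N); last lia.
rewrite (binR am) (binR (_ : ce <= cl+ce-a)%N); last lia.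
rewrite (binR hmn) (binR (_ : cl <= cl+ce)%N); last lia.
have -> : (cl + ce - a - (m - a) = cl+ce-m)%N by lia.
have -> : (cl + ce - a - ce = cl - a)%N by lia.
have -> : (cl + ce - cl = ce)%N by lia.
by field; rewrite ?factR_neq0 ?mulf_neq0 ?factR_neq0.
Qed.
Lemma fsum (ce m : nat) : forall p,
  (\sum_(a < m.+1) a.+1 * 'C(p+m-a, ce) + 'C(p.+1, ce.+2) + m.+1 * 'C(p, ce.+1)
   = 'C(p+m+2, ce.+2))%N.
Proof.
elim: m => [|m IH] p.
  rewrite big_ord1 /= addn0 subn0 mul1n addn2 !binS; lia.
rewrite big_ord_recr /=.
have E : (\sum_(i < m.+1) i.+1 * 'C(p + m.+1 - i, ce) =
          \sum_(i < m.+1) i.+1 * 'C(p.+1 + m - i, ce))%N.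
  by apply: eq_bigr => i _; rewrite addnS addSn.
rewrite E.
have -> : (p + m.+1 - m.+1 = p)%N by lia.
have -> : (p + m.+1 + 2 = p.+1 + m + 2)%N by lia.
rewrite -IH.
rewrite (binS p.+1 ce.+1) (binS p ce).
lia.
Qed.

Lemma id1 (cl ce m : nat) : (m <= cl + ce)%N ->
  'C(cl+ce+2, ce.+2)%:R * ('C(cl+ce,m)%:R / 'C(cl+ce,cl)%:R)
  = m.+1%:R * m.+2%:R / ((ce.+1)%:R * (ce.+2)%:R) * 'C(cl + ce + 2, m + 2)%:R :> rat.
Proof.
move=> h.
rewrite !addn2 (binR (_ : ce.+2 <= (cl+ce).+2)%N); last lia.
rewrite (binR (_ : m.+2 <= (cl+ce).+2)%N); last lia.
rewrite (binR h) (binR (_ : cl <= cl+ce)%N); last lia.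
have -> : ((cl+ce).+2 - ce.+2 = cl)%N by lia.
have -> : ((cl+ce).+2 - m.+2 = cl + ce - m)%N by lia.
have -> : (cl + ce - cl = ce)%N by lia.
rewrite !factS !natrM.
by field; nz.
Qed.

Theorem lemma3 (cl ce m : nat) :
  \sum_(a < m.+1)
     (a.+1)%:R * ('C(cl, a)%:R * 'C(cl + ce - a, m - a)%:R) / ('C(m, a)%:R : rat)
  = (m.+1)%:R * (m.+2)%:R / ((ce.+1)%:R * (ce.+2)%:R) * 'C(cl + ce + 2, m + 2)%:R
    - (cl.+1)%:R * (cl%:R - m%:R) / (ce.+1)%:R * 'C(cl, m)%:R
    + (cl%:R - m%:R) * (cl%:R - m%:R - 1) / (ce.+2)%:R * 'C(cl, m)%:R.
Proof.
have -> : \sum_(a < m.+1)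
     (a.+1)%:R * ('C(cl, a)%:R * 'C(cl + ce - a, m - a)%:R) / ('C(m, a)%:R : rat)
  = (\sum_(a < m.+1) a.+1 * 'C(cl+ce-a, ce))%N%:R * ('C(cl+ce,m)%:R / 'C(cl+ce,cl)%:R).
  rewrite natr_sum mulr_suml; apply: eq_bigr => a _.
  by rewrite -mulrA term_id ?natrM ?mulrA // -ltnS.
case: (ltnP (cl+ce) m) => hmn.
  rewrite (@bin_small (cl+ce) m) // (@bin_small (cl+ce+2)) ?(@bin_small cl m); try lia.
  by rewrite !mul0r !mulr0; ring.
have Hs := fsum ce m (cl+ce-m).
have E1 : (cl + ce - m + m = cl + ce)%N by lia.
rewrite E1 in Hs.
have -> : (\sum_(a < m.+1) a.+1 * 'C(cl + ce - a, ce))%N%:R =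
   'C(cl + ce + 2, ce.+2)%:R - 'C((cl+ce-m).+1, ce.+2)%:R
   - m.+1%:R * 'C(cl+ce-m, ce.+1)%:R :> rat.
  by rewrite -Hs !natrD natrM; ring.
case: (leqP cl m) => hclm.
  rewrite (@bin_small (cl+ce-m).+1) ?(@bin_small (cl+ce-m)); try lia.
  rewrite !mulr0 !subr0 id1 //.
  have [h|h] : (cl < m \/ cl = m)%N by lia.
    by rewrite (@bin_small cl m) // !mulr0; ring.
  by rewrite h subrr !mulr0 !mul0r; ring.
rewrite !mulrBl id1 //.
have [k hk] : exists k, cl = (m + k.+1)%N by exists (cl - m).-1; lia.
rewrite hk.
have -> : (m + k.+1 + ce - m = (k + ce).+1)%N by lia.
rewrite (binR (_ : ce.+2 <= (k + ce).+2)%N); last lia.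
rewrite (binR (_ : ce.+1 <= (k + ce).+1)%N); last lia.
rewrite (binR (_ : m <= m + k.+1 + ce)%N); last lia.
rewrite (binR (_ : m + k.+1 <= m + k.+1 + ce)%N); last lia.
rewrite (binR (_ : m <= m + k.+1)%N); last lia.
have -> : ((k + ce).+2 - ce.+2 = k)%N by lia.
have -> : ((k + ce).+1 - ce.+1 = k)%N by lia.
have -> : (m + k.+1 + ce - m = (k + ce).+1)%N by lia.
have -> : (m + k.+1 + ce - (m + k.+1) = ce)%N by lia.
have -> : (m + k.+1 - m = k.+1)%N by lia.
rewrite !factS !natrM -!natr1 !natrD -!natr1.
have h1 := ler0n rat k; have h2 := ler0n rat ce; have h3 := ler0n rat m.
by field; nz.
Qed.
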